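(* Let $k\ge1$ and let $w=a_1a_2\cdots a_k$ be an admissible $k$-word, and let $h=h(w)$. Then $h$ is the least non-negative integer $i$ with $T_k^{i}[w]\in\psi_k(V_1)$, and moreover $T_k^{h}[w]=\psi_k([a_{h+1}])$.
   Context: Let $\mathcal{A}$ be a finite alphabet of $r$ symbols and $T=(T_{x,y})$ an $r\times r$ matrix with entries in $\{0,1\}$ which is irreducible, i.e. the directed graph on $\mathcal{A}$ with an edge $x\to y$ iff $T_{y,x}=1$ is strongly connected. An admissible $k$-word is a string $a_1\cdots a_k$ of symbols with $T_{a_{i+1},a_i}=1$ for $1\le i\le k-1$. $V_k$ is the complex vector space with basis $\{[w]\}$ indexed by admissible $k$-words. $\psi_k:V_1\to V_k$ is linear with $\psi_k([a])$ the sum of $[w]$ over all admissible $k$-words beginning with $a$. $T_k:V_k\to V_k$ is linear with $T_k([a_1\cdots a_k])=\sum[a_2\cdots a_kx]$, summed over symbols $x$ with $a_2\cdots a_kx$ admissible. For an admissible $k$-word $u=u_1\cdots u_k$, $h(u)$ is the smallest non-negative integer $h$ such that $u$ is the only admissible $k$-word beginning with $u_1\cdots u_{h+1}$ (so $h(u)\le k-1$). *)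

(* Defs.v *)
From HB Require Import structures.
From mathcomp Require Import all_boot all_order all_algebra.
From mathcomp Require Import complex.
Set Implicit Arguments. Unset Strict Implicit. Unset Printing Implicit Defensive.
Import GRing.Theory Num.Theory.
Local Open Scope ring_scope.

(* Alphabet A = 'I_r ; transition matrix T : 'M[bool]_r (true = 1, false = 0). *)

(* irreducible: the digraph with edge x -> y iff T_{y,x} = 1 is strongly connected *)
Definition irreducible_tm (r : nat) (T : 'M[bool]_r) : Prop :=
  forall x y : 'I_r, connect (fun a b => T b a) x y.

Definition admb (r : nat) (T : 'M[bool]_r) (s : seq 'I_r) : bool :=
  all (fun p : 'I_r * 'I_r => T p.2 p.1) (zip s (behead s)).

Definition adm (r : nat) (T : 'M[bool]_r) (k : nat) : finType :=
  {w : k.-tuple 'I_r | admb T w}.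

Definition word (r : nat) (T : 'M[bool]_r) (k : nat) (w : adm T k) : seq 'I_r :=
  val (val w).

Definition V (R : rcfType) (r : nat) (T : 'M[bool]_r) (k : nat) :=
  {ffun adm T k -> R[i]}.

Definition bvec (R : rcfType) (r : nat) (T : 'M[bool]_r) (k : nat) (w : adm T k)
  : V R T k := [ffun v => (v == w)%:R].

Definition psi (R : rcfType) (r : nat) (T : 'M[bool]_r) (k : nat) (x : V R T 1)
  : V R T k :=
  \sum_(u : adm T 1) x u *:
     \sum_(w : adm T k | take 1 (word w) == word u) bvec R w.

Definition Tk_basis (R : rcfType) (r : nat) (T : 'M[bool]_r) (k : nat) (w : adm T k)
  : V R T k :=
  \sum_(x : 'I_r) \sum_(v : adm T k | word v == rcons (behead (word w)) x) bvec R v.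

Definition Tk (R : rcfType) (r : nat) (T : 'M[bool]_r) (k : nat) (f : V R T k)
  : V R T k :=
  \sum_(w : adm T k) f w *: Tk_basis R w.

Lemma admb1 (r : nat) (T : 'M[bool]_r) (a : 'I_r) : admb T (tval [tuple a]).
Proof. by []. Qed.
Definition word1 (r : nat) (T : 'M[bool]_r) (a : 'I_r) : adm T 1 :=
  exist _ [tuple a] (admb1 T a).

Definition hpred (r : nat) (T : 'M[bool]_r) (k : nat) (u : adm T k) (i : nat) : bool :=
  [forall v : adm T k, (take i.+1 (word v) == take i.+1 (word u)) ==> (v == u)].

Lemma hpred_ex (r : nat) (T : 'M[bool]_r) (k : nat) (u : adm T k) :
  exists i, hpred u i.
Proof.
exists k; apply/forallP => v; apply/implyP.
by rewrite !take_oversize ?size_tuple.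
Qed.

Definition h (r : nat) (T : 'M[bool]_r) (k : nat) (u : adm T k) : nat :=
  ex_minn (hpred_ex u).

Lemma h_lt (r : nat) (T : 'M[bool]_r) (k : nat) (hk : (0 < k)%N) (u : adm T k) :
  (h u < k)%N.
Proof.
rewrite /h; case: ex_minnP => m _ Hmin.
have : hpred u k.-1.
  apply/forallP => v; apply/implyP.
  by rewrite prednK // !take_oversize ?size_tuple.
move/Hmin; by case: k hk {u Hmin}.
Qed.

(* Main.v *)
Require Import Defs.
From HB Require Import structures.
From mathcomp Require Import all_boot all_order all_algebra.
From mathcomp Require Import complex zify.
From Stdlib Require Import Lia.
Set Implicit Arguments. Unset Strict Implicit. Unset Printing Implicit Defensive.
Import GRing.Theory Num.Theory.
Local Open Scope ring_scope.

Section Aux.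
Variable (R : rcfType) (r : nat) (T : 'M[bool]_r).
Definition ed : rel 'I_r := fun a b => T b a.

Lemma admb_cons x s : admb T (x :: s) = path ed x s.
Proof. by elim: s x => //= y s IH x; rewrite -IH. Qed.

Lemma admb_behead s : admb T s -> admb T (behead s).
Proof. by case: s => [|x [|y s]] //=; rewrite !admb_cons /= => /andP[]. Qed.

Lemma admb_drop n s : admb T s -> admb T (drop n s).
Proof.
elim: n s => [|n IH] s; first by rewrite drop0.
by case: s => [|x s] //= /admb_behead /= /IH.
Qed.

Lemma admb_take n s : admb T s -> admb T (take n s).
Proof.
case: s => [|x s] //; case: n => [|n] //=.
by rewrite !admb_cons; apply: take_path.
Qed.

Lemma admb_glue p x q : admb T (rcons p x) -> admb T (x :: q) ->
  admb T (rcons p x ++ q).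
Proof.
case: p => [|y p] //=.
by rewrite !admb_cons cat_path last_rcons => -> ->.
Qed.

Lemma wordK k : injective (@word r T k).
Proof. by move=> u v H; apply/val_inj/val_inj. Qed.

Lemma size_word k (u : adm T k) : size (word u) = k.
Proof. exact: size_tuple. Qed.

Definition mkadm k (s : seq 'I_r) (Hs : size s == k) (Ha : admb T s) : adm T k :=
  exist _ (Tuple Hs) Ha.

Lemma sum_ind (I : finType) (P : pred I) (u : I) :
  \sum_(v | P v) (u == v)%:R = (P u)%:R :> R[i].
Proof.
case Pu: (P u).
  rewrite (bigD1 u) //= eqxx big1 ?addr0 // => v /andP[_ /negbTE].
  by rewrite eq_sym => ->.
rewrite big1 // => v Pv; case: eqP => // E; by rewrite E Pv in Pu.
Qed.

Lemma sum_uniq1 (I : finType) (P : pred I) (b : bool) :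
  (forall a c, P a -> P c -> a = c) -> (b <-> exists v, P v) ->
  \sum_v (P v)%:R = b%:R :> R[i].
Proof.
move=> U [H1 H2]; case: b H1 H2 => H1 H2.
  have [v Pv] := H1 isT.
  rewrite (bigD1 v) //= Pv big1 ?addr0 // => c /negbTE ne.
  by case Pc: (P c) => //; rewrite (U _ _ Pc Pv) eqxx in ne.
rewrite big1 // => v _; case Pv: (P v) => //.
by have := H2 (ex_intro _ v Pv).
Qed.

Lemma bvecE k (w u : adm T k) : bvec R w u = (u == w)%:R.
Proof. by rewrite ffunE. Qed.

Lemma TkbE k (hk : (0 < k)%N) (w u : adm T k) :
  Tk_basis R w u = (behead (word w) == take k.-1 (word u))%:R.
Proof.
rewrite /Tk_basis sum_ffunE.
under eq_bigr => x _ do rewrite sum_ffunE.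
under eq_bigr => x _ do under eq_bigr => v _ do rewrite bvecE.
under eq_bigr => x _ do rewrite (sum_ind (fun v => word v == rcons (behead (word w)) x)).
have := size_word u; case: (lastP (word u)) => [|s y]; first by move=> /= E; rewrite -E in hk.
rewrite size_rcons => Es.
have -> : take k.-1 (rcons s y) = s by rewrite -Es /= -cats1 take_size_cat.
under eq_bigr => x _ do rewrite eqseq_rcons.
case: (eqVneq s (behead (word w))) => [_|NE] /=.
  by rewrite (bigD1 y) //= eqxx big1 ?addr0 // => v /negbTE; rewrite eq_sym => ->.
by rewrite big1.
Qed.

Lemma TkE k (hk : (0 < k)%N) (f : V R T k) (u : adm T k) :
  Tk f u = \sum_w f w * (behead (word w) == take k.-1 (word u))%:R.
Proof.
rewrite /Tk sum_ffunE; apply: eq_bigr => w _.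
by rewrite ffunE TkbE.
Qed.

Lemma behead_take n (s : seq 'I_r) : behead (take n.+1 s) = take n (behead s).
Proof. by case: s. Qed.

Lemma iterE k (hk : (0 < k)%N) (w : adm T k) i (hi : (i < k)%N) u :
  iter i (@Tk R r T k) (bvec R w) u = (take (k - i) (word u) == drop i (word w))%:R.
Proof.
elim: i hi u => [|i IH] hi u.
  by rewrite /= bvecE subn0 drop0 take_oversize ?size_word // (inj_eq (@wordK k)).
rewrite iterS TkE //.
under eq_bigr => v _ do rewrite IH ?(ltnW hi) // -natrM mulnb.
have Hn := subnSK (ltnW hi); set n := (k - i.+1)%N in Hn *; rewrite -Hn.
have Hdi : drop i.+1 (word w) = behead (drop i (word w)).
  by rewrite -drop1 drop_drop add1n.
have Hsz : size (drop i (word w)) = n.+1 by rewrite size_drop size_word Hn.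
case Ed: (drop i (word w)) Hsz Hdi => [|y d'] /= Hsz Hdi; first by move/eqP: Hsz.
case: Hsz => Hsz.
rewrite /= in Hdi; rewrite Hdi.
apply: sum_uniq1.
- move=> a c /andP[/eqP Ha /eqP Ha'] /andP[/eqP Hc /eqP Hc']; apply: wordK.
  move: Ha Ha' Hc Hc'.
  case: (word a) => [|xa sa]; case: (word c) => [|xc sc] //= [-> Ha] <- [-> Hc] ->.
  done.
- split.
  + move=> /eqP Ht.
    have Hwa : admb T (y :: d') by rewrite -Ed; apply: admb_drop; exact: (valP w).
    have Hua : admb T (word u) := valP u.
    have Su := size_word u.
    case Eu: (word u) Ht Hua Su => [|t0 t'] Ht Hua Su; first by rewrite -Su in hk.
    have [n' En] : exists n', n = n'.+1 by exists n.-1; rewrite /n; lia.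
    have [m Em] : exists m, k.-1 = m.+1 by exists k.-2; lia.
    rewrite En /= in Ht; rewrite -Ht admb_cons /= in Hwa.
    move: Hwa => /andP[Hyt _].
    have Hq : admb T (take k.-1 (t0 :: t')) by apply: admb_take.
    rewrite Em /= admb_cons in Hq.
    have Hs : size (y :: take k.-1 (t0 :: t')) == k.
      by rewrite /= size_takel ?Su //; lia.
    have Ha : admb T (y :: take k.-1 (t0 :: t')).
      by rewrite Em /= admb_cons /= Hyt.
    exists (mkadm Hs Ha); rewrite /= En /= take_takel; last by rewrite Em; lia.
    by rewrite -Ht !eqxx.
  + move=> [v /andP[/eqP Ha /eqP Ha']]; apply/eqP.
    have Hnk : (n <= k.-1)%N by rewrite /n; lia.
    by rewrite -(take_takel _ Hnk) -Ha' -behead_take Ha.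
Qed.

Lemma psiE k (x : V R T 1) (u : adm T k) :
  psi k x u = \sum_u1 x u1 * (take 1 (word u) == word u1)%:R.
Proof.
rewrite /psi sum_ffunE; apply: eq_bigr => u1 _; rewrite ffunE sum_ffunE.
under eq_bigr => v _ do rewrite bvecE.
by rewrite (sum_ind (fun v => take 1 (word v) == word u1)).
Qed.

Lemma psi_bvec k (b : adm T 1) (u : adm T k) :
  psi k (bvec R b) u = (take 1 (word u) == word b)%:R.
Proof.
rewrite psiE (bigD1 b) //= bvecE eqxx mul1r big1 ?addr0 // => c /negbTE ne.
by rewrite bvecE ne mul0r.
Qed.

Lemma psi_take1 k (x : V R T 1) (u u' : adm T k) :
  take 1 (word u) = take 1 (word u') -> psi k x u = psi k x u'.
Proof. by move=> E; rewrite !psiE E. Qed.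

Lemma ext_path (noDE : forall z, exists z', ed z z') z n :
  exists q, size q = n /\ path ed z q.
Proof.
elim: n z => [|n IH] z; first by exists [::].
have [z' Hz] := noDE z; have [q [Sq Pq]] := IH z'.
by exists (z' :: q); rewrite /= Sq Hz Pq.
Qed.

Lemma ext_adm (noDE : forall z, exists z', ed z z') k i (hi : (i < k)%N)
  (v : adm T k) : exists u : adm T k, take (k - i) (word u) = drop i (word v).
Proof.
have Sd : size (drop i (word v)) = (k - i)%N by rewrite size_drop size_word.
have Ad : admb T (drop i (word v)) by apply: admb_drop; exact: (valP v).
move: Sd Ad; case: (lastP (drop i (word v))) => [|p x].
  by move=> /= E; lia.
move=> Sd Ad.
have [q [Sq Pq]] := ext_path noDE x i.
have Hs : size (rcons p x ++ q) == k by rewrite size_cat Sd Sq; apply/eqP; lia.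
have Ha : admb T (rcons p x ++ q) by apply: admb_glue; rewrite ?admb_cons.
by exists (mkadm Hs Ha); rewrite /= take_size_cat.
Qed.

End Aux.

Theorem lemma1p5 (R : rcfType) (r : nat) (T : 'M[bool]_r)
  (Tirr : irreducible_tm T) (k : nat) (hk : (0 < k)%N) (w : adm T k) :
  let e := bvec R w in
  (* h(w) is the least i with T_k^i [w] in psi_k(V_1) *)
  (exists x : V R T 1, iter (h w) (@Tk R r T k) e = psi k x) /\
  (forall i : nat, (i < h w)%N ->
     ~ (exists x : V R T 1, iter i (@Tk R r T k) e = psi k x)) /\
  (* T_k^h [w] = psi_k([a_{h+1}]) *)
  iter (h w) (@Tk R r T k) e
    = psi k (bvec R (word1 T (tnth (val w) (Ordinal (h_lt hk w))))).
Proof.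
move=> e.
have Hh := h_lt hk w.
have [Hp Hm] : hpred w (h w) /\ forall n, hpred w n -> (h w <= n)%N.
  by rewrite /h; case: ex_minnP.
have Hwa : admb T (word w) := valP w.
have Sw := size_word w.
have P3 : iter (h w) (@Tk R r T k) e
    = psi k (bvec R (word1 T (tnth (val w) (Ordinal (h_lt hk w))))).
  apply/ffunP => u; rewrite /e iterE // psi_bvec /=.
  set c := tnth (val w) (Ordinal (h_lt hk w)).
  have Hc : drop (h w) (word w) = c :: drop (h w).+1 (word w).
    rewrite (drop_nth c) ?Sw //; congr (_ :: _).
    by rewrite /c (tnth_nth c); apply: set_nth_default; rewrite Sw.
  congr (_%:R); congr (nat_of_bool _); apply/idP/idP => /eqP.
    move=> Ht; apply/eqP; rewrite -(@take_takel _ 1 (k - h w)); last lia.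
    by rewrite Ht Hc /= take0.
  have Hua : admb T (word u) := valP u.
  have Su := size_word u.
  case Eu: (word u) Hua Su => [|t0 t'] Hua Su; first by rewrite /= in Su; lia.
  case=> Ht0 _; rewrite Ht0 in Hua Eu *.
  have [m Em] : exists m, (k - h w = m.+1)%N by exists (k - h w).-1; lia.
  rewrite Em /=.
  have Hsz1 : size (take (h w).+1 (word w)) = (h w).+1 by rewrite size_takel ?Sw.
  have Hs : size (take (h w).+1 (word w) ++ take m t') == k.
    rewrite /= in Su; rewrite size_cat Hsz1 size_takel; [apply/eqP; lia | lia].
  have Hnth : nth c (word w) (h w) = c.
    by move: Hc; rewrite (drop_nth c) ?Sw // => -[].
  have Ha : admb T (take (h w).+1 (word w) ++ take m t').
    rewrite (take_nth c) ?Sw // Hnth.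
    apply: admb_glue; last by have := admb_take m.+1 Hua.
    by have := admb_take (h w).+1 Hwa; rewrite (take_nth c) ?Sw // Hnth.
  have := forallP Hp (mkadm Hs Ha); rewrite /= take_size_cat // eqxx /=.
  move=> /eqP Ev.
  have := congr1 (@word r T k) Ev; rewrite /= => Ew.
  by rewrite Hc -Ew drop_size_cat.
split; first by exists (bvec R (word1 T (tnth (val w) (Ordinal (h_lt hk w))))).
split; last exact: P3.
move=> i hi [x Hx].
have hik : (i < k)%N by lia.
have Hnp : ~~ hpred w i by apply/negP => /Hm; lia.
move: Hnp => /forallPn [v]; rewrite negb_imply => /andP[/eqP Htk Hne].
have noDE : forall z, exists z', ed T z z'.
  have [a0 [a1 [q Ea]]] : exists a0 a1 q, word w = a0 :: a1 :: q.
    move: Sw; case: (word w) => [|a0 [|a1 q]] /= Sw; try lia.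
    by exists a0, a1, q.
  have Ha01 : ed T a0 a1 by move: Hwa; rewrite Ea admb_cons /= => /andP[].
  move=> z; have /connectP [p Hpp Hl] := Tirr z a0.
  case: p Hpp Hl => [|z' p] /=.
    by move=> _ <-; exists a1.
  by move=> /andP[Hz _] _; exists z'.
have [u0 Hu0] := ext_adm noDE hik w.
have [u1 Hu1] := ext_adm noDE hik v.
have E0 := congr1 (fun f : V R T k => f u0) Hx.
have E1 := congr1 (fun f : V R T k => f u1) Hx.
rewrite /= /e iterE // Hu0 eqxx in E0.
rewrite /= /e iterE // Hu1 in E1.
have Hdv : (drop i (word v) == drop i (word w)) = false.
  apply/negbTE/negP => /eqP Hd; move/negP: Hne; apply; apply/eqP/wordK.
  rewrite -(cat_take_drop i (word v)) -(cat_take_drop i (word w)) Hd.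
  by rewrite -(@take_takel _ i i.+1) // Htk take_takel.
rewrite Hdv in E1.
have : psi k x u0 = psi k x u1.
  apply: psi_take1.
  rewrite -(@take_takel _ 1 (k - i)) ?Hu0; last lia.
  rewrite -(@take_takel _ 1 (k - i) (word u1)) ?Hu1; last lia.
  by rewrite !take_drop Htk.
rewrite -E0 -E1 => /eqP; by rewrite oner_eq0.
Qed.
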